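(* Let $B\in\mathbb{R}^{n\times n}$ be symmetric, partitioned into $p\times p$ blocks $B_{st}\in\mathbb{R}^{n_s\times n_t}$. Let $\check B$ be its strictly block lower triangular part ($\check B_{st}=B_{st}$ if $s>t$, $0$ otherwise) and $\hat B$ its strictly block upper triangular part ($\hat B_{st}=B_{st}$ if $s<t$, $0$ otherwise). Then for every $\eta\in\mathbb{C}^n$ with $\|\eta\|=1$, $$-\rho(B)\le\mathrm{Re}(\eta^H\check B\eta)\le\rho(B)\quad\text{and}\quad -\rho(B)\le\mathrm{Re}(\eta^H\hat B\eta)\le\rho(B).$$
   Context: $n_1,\dots,n_p$ are positive integers with $\sum_sn_s=n$. $\rho(B)$ is the spectral radius of $B$, and $\eta^H$ is the conjugate transpose. *)

(* Defs.v *)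
From HB Require Import structures.
From mathcomp Require Import all_boot all_order all_algebra.
From mathcomp Require Import complex.
Set Implicit Arguments. Unset Strict Implicit. Unset Printing Implicit Defensive.
Import Order.TTheory GRing.Theory Num.Theory.
Local Open Scope ring_scope.
Local Open Scope complex_scope.

Definition eigvals (R : rcfType) (n : nat) (B : 'M[R]_n) : seq R[i] :=
  sval (closed_field_poly_normal (char_poly (map_mx (fun x : R => x%:C) B))).

Definition spectral_radius (R : rcfType) (n : nat) (B : 'M[R]_n) : R :=
  \big[Num.max/0]_(z <- eigvals B) ComplexField.Normc.normc z.

(* Block index of a row/column index i, for the partition of {0..n-1}
   into consecutive blocks of sizes ns 0, ..., ns (p-1):
   blk i = the number of s with ns 0 + ... + ns s <= i, which (for positive
   sizes) is the 0-based index of the block containing i. *)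
Definition blk (p : nat) (ns : 'I_p -> nat) (n : nat) (i : 'I_n) : nat :=
  #|[set s : 'I_p | (\sum_(t < p | t <= s) ns t <= i)%N]|.

Definition blk_lower (R : rcfType) (p : nat) (ns : 'I_p -> nat) (n : nat)
  (B : 'M[R]_n) : 'M[R]_n :=
  \matrix_(i, j) (if (blk ns j < blk ns i)%N then B i j else 0).

Definition blk_upper (R : rcfType) (p : nat) (ns : 'I_p -> nat) (n : nat)
  (B : 'M[R]_n) : 'M[R]_n :=
  \matrix_(i, j) (if (blk ns i < blk ns j)%N then B i j else 0).

Definition hform (R : rcfType) (n : nat) (M : 'M[R]_n) (eta : 'cV[R[i]]_n) : R[i] :=
  ((map_mx conjc eta)^T *m map_mx (fun x : R => x%:C) M *m eta) 0 0.

Definition cnorm2 (R : rcfType) (n : nat) (eta : 'cV[R[i]]_n) : R :=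
  \sum_i ComplexField.Normc.normc (eta i 0) ^+ 2.

(* Main.v *)
Require Import Defs.
From HB Require Import structures.
From mathcomp Require Import all_boot all_order all_algebra.
From mathcomp Require Import complex.
From mathcomp Require Import ring lra.
Import Order.TTheory GRing.Theory Num.Theory.
Local Open Scope ring_scope.
Local Open Scope complex_scope.

Section Aux.
Variable R : rcfType.

Lemma normcC (x : R) : ComplexField.Normc.normc (x%:C) = `|x|.
Proof. by rewrite /ComplexField.Normc.normc /= expr0n /= addr0 sqrtr_sqr. Qed.

Lemma conjc_mul_self (z : R[i]) :
  conjc z * z = ((ComplexField.Normc.normc z) ^+ 2)%:C.
Proof.
case: z => a b; rewrite /ComplexField.Normc.normc sqr_sqrtr ?addr_ge0 ?sqr_ge0 //.
by simpc; congr (_ +i* _); rewrite ?expr2; ring.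
Qed.

Lemma normc_ge0 (z : R[i]) : 0 <= ComplexField.Normc.normc z.
Proof. by case: z => a b; rewrite /ComplexField.Normc.normc sqrtr_ge0. Qed.

Lemma spectral_radius_ge (n : nat) (B : 'M[R]_n) z :
  z \in eigvals B -> ComplexField.Normc.normc z <= spectral_radius B.
Proof.
move=> hz; rewrite /spectral_radius.
exact: (le_bigmax_seq _ _ xpredT _ hz isT).
Qed.

End Aux.
Section Key.
Variable R : rcfType.
Local Notation nc := (@ComplexField.Normc.normc R).

Lemma hform_cnorm (n : nat) (v : 'cV[R[i]]_n) :
  (((map_mx conjc v)^T *m v) 0 0) = (cnorm2 v)%:C.
Proof.
rewrite mxE /cnorm2 rmorph_sum; apply: eq_bigr => i _.
by rewrite !mxE conjc_mul_self.
Qed.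

Lemma key (n : nat) (B : 'M[R]_n) : B^T = B -> forall eta : 'cV[R[i]]_n,
  - spectral_radius B * cnorm2 eta <= complex.Re (hform B eta)
    <= spectral_radius B * cnorm2 eta.
Proof.
move=> symB eta.
set A : 'M[R[i]]_n := map_mx (fun x : R => x%:C) B.
have Aherm : A \is hermsymmx.
  apply: realsym_hermsym.
    apply/is_hermitianmxP; rewrite expr0 scale1r; apply/matrixP => i j.
    by rewrite !mxE -[in LHS]symB mxE.
  by apply/mxOverP => i j; rewrite mxE; apply/complex_realP; eexists.
have /orthomx_spectralP eA := hermitian_normalmx Aherm.
move: eA.
set P := spectralmx A; set d := spectral_diag A => eA.
have Pu : P \is unitarymx by apply: spectral_unitarymx.
have Punit : P \in unitmx by apply: spectral_unit.
have Pinv := invmx_unitary Pu.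
have dreal := hermitian_spectral_diag_real Aherm.
pose r k := complex.Re (d 0 k).
have dr k : d 0 k = (r k)%:C by rewrite /r RRe_real //; apply: (mxOverP dreal).
have rb k : `|r k| <= spectral_radius B.
  rewrite -normcC -dr; apply: spectral_radius_ge.
  have : eigenvalue A (d 0 k).
    apply/eigenvalueP; exists (row k P).
      rewrite -row_mul eA !mulmxA mulmxV // mul1mx row_mul row_diag_mx.
      by rewrite -scalemxAl -rowE.
    apply/negP => /eqP h.
    have := unitarymxP Pu => /(congr1 (row k)); rewrite row_mul h mul0mx.
    move/matrixP => /(_ 0 k); rewrite !mxE eqxx /= => /eqP.
    by rewrite eq_sym oner_eq0.
  rewrite eigenvalue_root_char /eigvals -/A.
  case: closed_field_poly_normal => s /= hs.
  by rewrite hs (monicP (char_poly_monic _)) scale1r root_prod_XsubC.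
set w := P *m eta.
have hw : hform B eta = ((map_mx conjc w)^T *m diag_mx d *m w) 0 0.
  rewrite /hform -/A eA Pinv /w map_mxM trmx_mul !map_trmx !mulmxA; reflexivity.
have hc : cnorm2 eta = cnorm2 w.
  apply: complexI; rewrite -!hform_cnorm /w map_mxM trmx_mul.
  rewrite !mulmxA -(mulmxA _ _ P).
  have -> : (map_mx conjc P)^T *m P = 1%:M.
    by rewrite map_trmx; have := mulVmx Punit; rewrite Pinv.
  rewrite mulmx1; reflexivity.
have he : complex.Re (hform B eta) = \sum_k r k * nc (w k 0) ^+ 2.
  rewrite hw mxE raddf_sum /=; apply: eq_bigr => k _.
  rewrite mul_mx_diag !mxE dr mulrAC conjc_mul_self.
  rewrite -rmorphM mulrC; reflexivity.
rewrite he hc /cnorm2 !mulr_sumr; apply/andP; split; apply: ler_sum => k _.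
  rewrite ler_wpM2r ?exprn_ge0 ?normc_ge0 //.
  by rewrite lerNl; apply: le_trans (rb k); rewrite -normrN ler_norm.
by rewrite ler_wpM2r ?exprn_ge0 ?normc_ge0 //; apply: le_trans (rb k); rewrite ler_norm.
Qed.
End Key.
Section Main.
Variable R : rcfType.
Local Notation nc := (@ComplexField.Normc.normc R).

Lemma Re_mul3 (a b : R[i]) (x : R) : complex.Re (a * x%:C * b) = x * complex.Re (a * b).
Proof. by case: a => a1 a2; case: b => b1 b2; rewrite /=; ring. Qed.

Lemma Re_conj_sym (a b : R[i]) : complex.Re (conjc a * b) = complex.Re (conjc b * a).
Proof. by case: a => a1 a2; case: b => b1 b2; rewrite /=; ring. Qed.

Lemma hformRe (n : nat) (M : 'M[R]_n) (eta : 'cV[R[i]]_n) :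
  complex.Re (hform M eta) =
  \sum_j \sum_i M i j * complex.Re (conjc (eta i 0) * eta j 0).
Proof.
rewrite /hform !mxE raddf_sum; apply: eq_bigr => j _.
rewrite !mxE mulr_suml raddf_sum; apply: eq_bigr => i _.
rewrite !mxE; exact: Re_mul3.
Qed.

Lemma ind_sum (p m : nat) (hm : (m < p.+1)%N) (F : 'I_p.+1 -> R) :
  \sum_(k < p.+1) (if m == k then F k else 0) = F (Ordinal hm).
Proof.
rewrite (bigD1 (Ordinal hm)) //= eqxx big1 ?addr0 // => k hk.
case: eqP => // e; case/eqP: hk; apply: val_inj => /=; by rewrite e.
Qed.

End Main.

Theorem lemma11 (R : rcfType) (p : nat) (ns : 'I_p -> nat) (n : nat)
  (B : 'M[R]_n) :
  (forall s, (0 < ns s)%N) -> (\sum_(s < p) ns s)%N = n ->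
  B^T = B ->
  forall eta : 'cV[R[i]]_n, cnorm2 eta = 1 ->
    (- spectral_radius B <= complex.Re (hform (blk_lower ns B) eta) <= spectral_radius B)
    /\ (- spectral_radius B <= complex.Re (hform (blk_upper ns B) eta) <= spectral_radius B).
Proof.
move=> _ _ symB eta hn.
have symB' i j : B j i = B i j by rewrite -[in LHS]symB mxE.
pose bi := @blk p ns n.
have bl i : (bi i < p.+1)%N.
  by rewrite ltnS /bi /blk; apply: leq_trans (max_card _) _; rewrite card_ord.
pose g i j := complex.Re (conjc (eta i 0) * eta j 0).
have gs i j : g i j = g j i by apply: Re_conj_sym.
set rho := spectral_radius B.
have RL : complex.Re (hform (blk_lower ns B) eta) =
    \sum_j \sum_i (if (bi j < bi i)%N then B i j else 0) * g i j.
  by rewrite hformRe; apply: eq_bigr => j _; apply: eq_bigr => i _; rewrite mxE.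
have RU : complex.Re (hform (blk_upper ns B) eta) =
    \sum_j \sum_i (if (bi i < bi j)%N then B i j else 0) * g i j.
  by rewrite hformRe; apply: eq_bigr => j _; apply: eq_bigr => i _; rewrite mxE.
have LU : complex.Re (hform (blk_lower ns B) eta) = complex.Re (hform (blk_upper ns B) eta).
  rewrite RL RU exchange_big /=; apply: eq_bigr => i _; apply: eq_bigr => j _.
  by rewrite (symB' i j) (gs j i).
pose Q (k : 'I_p.+1) : 'cV[R[i]]_n := \col_i (if bi i == k then eta i 0 else 0).
have hD : \sum_(k < p.+1) complex.Re (hform B (Q k)) =
    \sum_j \sum_i (if bi i == bi j then B i j else 0) * g i j.
  under eq_bigr do rewrite hformRe.
  rewrite exchange_big; apply: eq_bigr => j _; rewrite exchange_big; apply: eq_bigr => i _.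
  rewrite (eq_bigr (fun k : 'I_p.+1 => if bi i == k then (if bi j == k then B i j * g i j else 0) else 0)); last first.
    move=> k _; rewrite !mxE; case: (bi i == k); case: (bi j == k); rewrite ?conjc0 ?mul0r ?mulr0 //.
  apply: (etrans (@ind_sum R _ _ (bl i) (fun k : 'I_p.+1 => if bi j == k then B i j * g i j else 0))) => /=.
  rewrite eq_sym.
  case: ifP => _ //; by rewrite mul0r.
have hcn : \sum_(k < p.+1) cnorm2 (Q k) = cnorm2 eta.
  rewrite /cnorm2 exchange_big; apply: eq_bigr => i _.
  rewrite (eq_bigr (fun k : 'I_p.+1 => if bi i == k then ComplexField.Normc.normc (eta i 0) ^+ 2 else 0)); last first.
    by move=> k _; rewrite mxE; case: ifP => // _; rewrite ComplexField.Normc.normc0 expr0n.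
  exact: (@ind_sum R _ _ (bl i) (fun=> _)).
have kB := @key R n B symB eta; rewrite hn mulr1 in kB.
have h1 : \sum_(k < p.+1) (- rho * cnorm2 (Q k)) <= \sum_(k < p.+1) complex.Re (hform B (Q k)).
  by apply: ler_sum => k _; case/andP: (@key R n B symB (Q k)).
have h2 : \sum_(k < p.+1) complex.Re (hform B (Q k)) <= \sum_(k < p.+1) (rho * cnorm2 (Q k)).
  by apply: ler_sum => k _; case/andP: (@key R n B symB (Q k)).
rewrite -!mulr_sumr hcn hn mulr1 in h1 h2.
have hB : complex.Re (hform B eta) = complex.Re (hform (blk_lower ns B) eta)
   + complex.Re (hform (blk_upper ns B) eta) + \sum_(k < p.+1) complex.Re (hform B (Q k)).
  rewrite hformRe RL RU hD -!big_split; apply: eq_bigr => j _.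
  rewrite -!big_split; apply: eq_bigr => i _ /=.
  case: (ltngtP (bi i) (bi j)) => h; rewrite ?mul0r ?add0r ?addr0 //.

case/andP: kB => kB1 kB2.
rewrite -/rho in kB1 kB2.
by split; apply/andP; split; lra.
Qed.
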